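(* Let $N=\{1,\ldots,n\}$ and let $\mathscr{D}$ be a family of subsets in $2^N\setminus\{\varnothing,N\}$. Let $v_{\mathscr{D}}$ be the game defined by $v_{\mathscr{D}}(S)=1$ if $S\in\mathscr{D}$ or $S=N$, and $v_{\mathscr{D}}(S)=0$ otherwise. Then $v_{\mathscr{D}}$ is a vertex of $\mathscr{BG}_+(n)$ if and only if either $\mathscr{D}=\varnothing$ or $\bigcap_{S\in\mathscr{D}}S\neq\varnothing$.
   Context: A game on $N$ is a map $v:2^N\to\mathbb{R}$ with $v(\varnothing)=0$. $\mathscr{G}_+(n)$ is the set of games with $v\geqslant 0$ and $v(N)=1$. The core of $v$ is $C(v)=\{x\in\mathbb{R}^N: \sum_{i\in S}x_i\geqslant v(S)\ \forall S,\ \sum_{i\in N}x_i=v(N)\}$, and $v$ is balanced iff $C(v)\neq\varnothing$. $\mathscr{BG}_+(n)$ is the polytope of balanced games in $\mathscr{G}_+(n)$, in $\mathbb{R}^{2^N\setminus\{\varnothing,N\}}$. *)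

(* Defs.v *)
(* Games on N = 'I_n (players 0..n-1, standing for 1..n). *)
From HB Require Import structures.
From mathcomp Require Import all_boot all_order all_algebra.
Set Implicit Arguments. Unset Strict Implicit. Unset Printing Implicit Defensive.
Import Order.TTheory GRing.Theory Num.Theory.
Local Open Scope ring_scope.

Definition game (R : realFieldType) (n : nat) := {set 'I_n} -> R.

Definition is_game (R : realFieldType) n (v : game R n) : Prop := v set0 = 0.

Definition in_Gplus (R : realFieldType) n (v : game R n) : Prop :=
  is_game v /\ (forall S, 0 <= v S) /\ v setT = 1.

Definition in_core (R : realFieldType) n (v : game R n) (x : 'I_n -> R) : Prop :=
  (forall S : {set 'I_n}, v S <= \sum_(i in S) x i) /\ \sum_(i < n) x i = v setT.

Definition balanced (R : realFieldType) n (v : game R n) : Prop :=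
  exists x : 'I_n -> R, in_core v x.

Definition in_BGplus (R : realFieldType) n (v : game R n) : Prop :=
  in_Gplus v /\ balanced v.

(* Coordinates of the ambient space R^{2^N \ {empty, N}}. *)
Definition coord_set n (S : {set 'I_n}) : bool := (S != set0) && (S != setT).

Definition is_vertex_BGplus (R : realFieldType) n (v : game R n) : Prop :=
  in_BGplus v /\
  forall (u w : game R n) (t : R),
    in_BGplus u -> in_BGplus w -> 0 < t -> t < 1 ->
    (forall S, coord_set S -> v S = t * u S + (1 - t) * w S) ->
    forall S, coord_set S -> u S = w S.

Definition vD (R : realFieldType) n (D : {set {set 'I_n}}) : game R n :=
  fun S => if (S \in D) || (S == setT) then 1 else 0.

(* Main.v *)
Require Import Defs.
From HB Require Import structures.
From mathcomp Require Import all_boot all_order all_algebra.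
From mathcomp Require Import ring lra.
Import Order.TTheory GRing.Theory Num.Theory.
Local Open Scope ring_scope.

Lemma sum_sub_le (R : realFieldType) n (x : 'I_n -> R) (S : {set 'I_n}) :
  (forall i, 0 <= x i) -> \sum_(i in S) x i <= \sum_(i < n) x i.
Proof.
move=> x0; rewrite big_mkcond /=; apply: ler_sum => i _.
by case: (i \in S).
Qed.

Lemma core_nonneg (R : realFieldType) n (v : game R n) x :
  (forall S, 0 <= v S) -> in_core v x -> forall i, 0 <= x i.
Proof.
move=> v0 [c _] i; apply: le_trans (v0 [set i]) _.
by have := c [set i]; rewrite big_set1.
Qed.

Lemma BG_bounds (R : realFieldType) n (u : game R n) :
  in_BGplus u -> forall S, 0 <= u S <= 1.
Proof.
move=> [[_ [u0 uT]] [x cx]] S; rewrite (u0 S) /=.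
have x0 := @core_nonneg _ _ u x u0 cx.
case: cx => c sx; apply: le_trans (c S) _; rewrite -uT -sx.
exact: sum_sub_le.
Qed.

Theorem theorem9 (R : realFieldType) (n : nat) (D : {set {set 'I_n}}) :
  (0 < n)%N ->
  (forall S, S \in D -> coord_set S) ->
  is_vertex_BGplus (vD R D) <->
  (D = set0 \/ \bigcap_(S in D) S != set0).
Proof.
move=> n0 HD; split.
- move=> [[[_ [v0 vT]] [x cx]] _].
  have x0 := @core_nonneg _ _ _ x v0 cx.
  case: (eqVneq D set0) => [->|Dn]; first by left.
  right.
  case: cx => c sx.
  have sx1 : \sum_(i < n) x i = 1 by rewrite sx.
  have [i xi] : exists i, x i != 0.
    apply/existsP; rewrite -negb_forall; apply/negP => /forallP H.
    move: sx1; rewrite big1 => [|i _]; last exact/eqP.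
    by move/eqP; rewrite eq_sym oner_eq0.
  apply/set0Pn; exists i; apply/bigcapP => S SD.
  apply/negPn/negP => iS.
  have := c S; rewrite /vD SD /= => h1.
  have : \sum_(j in S) x j + x i <= \sum_(j < n) x j.
    rewrite [X in _ <= X](bigID (fun j => j \in S)) /=.
    apply: lerD => //.
    by rewrite (bigD1 i) //= lerDl sumr_ge0.
  rewrite sx1 => h2.
  have : 0 < x i by rewrite lt_neqAle eq_sym xi x0.
  move: h1 h2; lra.
- move=> Hc.
  have [i Hi] : exists i : 'I_n, forall S, S \in D -> i \in S.
    case: Hc => [->|/set0Pn [i /bigcapP Hi]].
      by exists (Ordinal n0) => S; rewrite inE.
    by exists i.
  have nT : (set0 : {set 'I_n}) != setT.
    apply/eqP => /setP /(_ (Ordinal n0)); by rewrite !inE.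
  have v01 : forall S, (vD R D S = 0) \/ (vD R D S = 1).
    by move=> S; rewrite /vD; case: ifP => _; [right|left].
  have inBG : in_BGplus (vD R D).
    split; [split; [|split]|].
    + rewrite /is_game /vD.
      case: ifP => // /orP [/HD|/eqP h]; first by rewrite /coord_set eqxx.
      by move: nT; rewrite h eqxx.
    + by move=> S; case: (v01 S) => ->.
    + by rewrite /vD eqxx orbT.
    + exists (fun j => if j == i then 1 else 0); split.
      * move=> S; rewrite /vD.
        case: ifP => [/orP H|_]; last first.
          by apply: sumr_ge0 => j _; case: ifP.
        have iS : i \in S by case: H => [/Hi|/eqP ->] //; rewrite inE.
        by rewrite (bigD1 i) //= big1 ?addr0 ?eqxx // => j /andP [_ /negbTE ->].
      * rewrite (bigD1 i) //= big1 ?addr0 /vD ?eqxx ?orbT //.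
        by move=> j /negbTE ->.
  split => // u w t Hu Hw t0 t1 Hv S cS.
  have := Hv S cS; have /andP [u0 u1] := @BG_bounds _ _ u Hu S.
  have /andP [w0 w1] := @BG_bounds _ _ w Hw S.
  case: (v01 S) => ->; nra.
Qed.
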